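(* Let $x=[x_1,\dots,x_N]\in S_N$ contain a minimal $[4321]$-pattern at positions $p<q<r<s$, and let $x'$ be obtained from $x$ by exchanging the entries in positions $q$ and $r$ (so that $(x'_p,x'_q,x'_r,x'_s)$ is a $[4231]$-pattern). Then $\omega(\pi_{x'})=\omega(\pi_x)$.
   Context: Permutations are in one-line notation and composed as functions. $H_0(S_N)$ is generated by $\pi_1,\dots,\pi_{N-1}$ with $\pi_i^2=\pi_i$, $\pi_i\pi_j=\pi_j\pi_i$ for $|i-j|\ge2$, $\pi_i\pi_{i+1}\pi_i=\pi_{i+1}\pi_i\pi_{i+1}$; $\pi_w=\pi_{i_1}\cdots\pi_{i_k}$ for a reduced word $w=s_{i_1}\cdots s_{i_k}$. $\phi$ is the quotient morphism from $H_0(S_N)$ onto its quotient by the relations $\pi_i\pi_{i+1}\pi_i=\pi_i\pi_{i+1}$ ($1\le i\le N-2$), $\pi_i\mapsto\pi_i$; $\Psi$ is the automorphism of $H_0(S_N)$ with $\Psi(\pi_i)=\pi_{N-i}$; $\omega(y)=(\phi(y),\phi(\Psi(y)))$. A $[4321]$-pattern is a quadruple of positions $p<q<r<s$ with $x_p>x_q>x_r>x_s$; its width is $(q-p,r-q,s-r)$, and it is minimal if its width is lexicographically minimal among all $[4321]$-patterns in $x$. *)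

(* Defs.v *)
From mathcomp Require Import all_boot all_order all_fingroup.
From Stdlib Require Import Relations.
Set Implicit Arguments. Unset Strict Implicit. Unset Printing Implicit Defensive.

(* Permutations of {1..N} are modelled as {perm 'I_N}, positions/values
   shifted to 0-based: the one-line entry x_j (1-based) is (x (j-1)) + 1. *)

(* simple transposition s_i (1 <= i <= N-1): exchanges i and i+1, i.e. the
   0-based points i-1 and i *)
Definition simple_tr (N i : nat) : {perm 'I_N} :=
  match @insub nat (fun k => k < N) _ i.-1, @insub nat (fun k => k < N) _ i with
  | Some a, Some b => tperm a b
  | _, _ => 1%g
  end.

Definition valid_word (N : nat) (w : seq nat) : bool :=
  all (fun i => (0 < i) && (i < N)) w.

(* s_{i1} ... s_{ik}, composed as functions (s_{ik} applied first).
   In mathcomp (p * q) x = q (p x), hence the order below. *)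
Fixpoint perm_of_word (N : nat) (w : seq nat) : {perm 'I_N} :=
  match w with
  | [::] => 1%g
  | i :: w' => (perm_of_word N w' * simple_tr N i)%g
  end.

Definition reduced_word (N : nat) (x : {perm 'I_N}) (w : seq nat) : Prop :=
  valid_word N w /\ perm_of_word N w = x /\
  forall w', valid_word N w' -> perm_of_word N w' = x -> size w <= size w'.

(* defining relations of H_0(S_N) *)
Inductive hecke_gen (N : nat) : seq nat -> seq nat -> Prop :=
| hg_idem i : 0 < i < N -> hecke_gen N [:: i; i] [:: i]
| hg_comm i j : 0 < i < N -> 0 < j < N -> (i + 2 <= j) || (j + 2 <= i) ->
    hecke_gen N [:: i; j] [:: j; i]
| hg_braid i : 0 < i -> i.+1 < N -> hecke_gen N [:: i; i.+1; i] [:: i.+1; i; i.+1].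

(* defining relations of the quotient (target of phi): those of H_0(S_N)
   plus pi_i pi_{i+1} pi_i = pi_i pi_{i+1} *)
Inductive phi_gen (N : nat) : seq nat -> seq nat -> Prop :=
| pg_hecke a b : hecke_gen N a b -> phi_gen N a b
| pg_extra i : 0 < i -> i.+1 < N -> phi_gen N [:: i; i.+1; i] [:: i; i.+1].

Definition in_context (R : seq nat -> seq nat -> Prop) (x y : seq nat) : Prop :=
  exists u v a b, R a b /\ x = u ++ a ++ v /\ y = u ++ b ++ v.

(* monoid congruence generated by R: equality in the presented monoid *)
Definition cong_of (R : seq nat -> seq nat -> Prop) : relation (seq nat) :=
  clos_refl_sym_trans (seq nat) (in_context R).

(* phi(pi_w) = phi(pi_w') *)
Definition phi_eq (N : nat) (w w' : seq nat) : Prop := cong_of (phi_gen N) w w'.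

Definition psi_word (N : nat) (w : seq nat) : seq nat := map (fun i => N - i) w.

(* omega(pi_w) = omega(pi_w') *)
Definition omega_eq (N : nat) (w w' : seq nat) : Prop :=
  phi_eq N w w' /\ phi_eq N (psi_word N w) (psi_word N w').

Definition is_4321 (N : nat) (x : {perm 'I_N}) (p q r s : 'I_N) : bool :=
  [&& p < q, q < r, r < s, x q < x p, x r < x q & x s < x r].

Definition lex3_le (a b c a' b' c' : nat) : Prop :=
  a < a' \/ (a = a' /\ (b < b' \/ (b = b' /\ c <= c'))).

Definition minimal_4321 (N : nat) (x : {perm 'I_N}) (p q r s : 'I_N) : Prop :=
  is_4321 x p q r s /\
  forall p' q' r' s' : 'I_N, is_4321 x p' q' r' s' ->
    lex3_le (q - p) (r - q) (s - r) (q' - p') (r' - q') (s' - r').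

(* Main.v *)
Require Import Defs.
From mathcomp Require Import all_boot all_order all_fingroup.
From mathcomp Require Import zify.
From Stdlib Require Import Relations.
Set Implicit Arguments. Unset Strict Implicit. Unset Printing Implicit Defensive.



Definition Smin (N : nat) (X : nat -> nat) (j : nat) := \big[minn/N]_(j <= k < N) X k.
Definition Qmax (X : nat -> nat) (n : nat) := \big[maxn/0]_(0 <= k < n) X k.
Definition swapn (a b k : nat) := if k == a then b else if k == b then a else k.
Definition sig (i j : nat) := if j == i then i.-1 else j.

Lemma SminS N X j : j < N -> Smin N X j = minn (X j) (Smin N X j.+1).
Proof. by move=> h; rewrite /Smin big_ltn. Qed.
Lemma Smin_geq N X j : N <= j -> Smin N X j = N.
Proof. by move=> h; rewrite /Smin big_geq. Qed.
Lemma QmaxS X n : Qmax X n.+1 = maxn (Qmax X n) (X n).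
Proof. by rewrite /Qmax big_nat_recr. Qed.
Lemma Qmax0 X : Qmax X 0 = 0.
Proof. by rewrite /Qmax big_geq. Qed.

Lemma down_ind N (P : nat -> Prop) : (forall j, N <= j -> P j) ->
  (forall j, j < N -> P j.+1 -> P j) -> forall j, P j.
Proof.
move=> H0 HS j; have: forall k j, N - j <= k -> P j.
  elim=> [|k IH] j' Hk; first by apply: H0; lia.
  case: (leqP N j') => h; first exact: H0.
  apply: HS => //; apply: IH; lia.
by apply; apply: leqnn.
Qed.

Lemma Smin_le N X j k : j <= k < N -> Smin N X j <= X k.
Proof.
move: j; apply: (down_ind (N:=N)) => j hj; first lia.
move=> IH /andP[h1 h2]; rewrite SminS; last lia.
case: (ltnP j k) => h.
  have := IH (ltac:(apply/andP; split; lia)); lia.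
have -> : j = k by lia. lia.
Qed.

Lemma Qmax_ge X k n : k < n -> X k <= Qmax X n.
Proof.
elim: n => [|n IH] h; first lia.
rewrite QmaxS; case: (ltnP k n) => h'; first (have := IH h'; lia).
have -> : k = n by lia. lia.
Qed.

Lemma Smin_step N X i : 0 < i < N -> X i.-1 < X i ->
  forall j, Smin N (fun k => X (swapn i.-1 i k)) j = Smin N X (sig i j).
Proof.
move=> /andP[i0 iN] hx; apply: (down_ind (N:=N)) => j hj.
  rewrite !Smin_geq // /sig; case: eqP => //; lia.
move=> IH; rewrite SminS // IH /sig /swapn.
case: (j =P i) => [->|ji].
  rewrite (_ : (i == i.-1) = false); last (apply/eqP; lia).
  rewrite (_ : (i.+1 == i) = false); last (apply/eqP; lia).
  rewrite (SminS _ (ltac:(lia) : i.-1 < N)).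
  have -> : i.-1.+1 = i by lia.
  rewrite (SminS _ iN); lia.
case: (j.+1 =P i) => [h|h].
  have hj1 : j = i.-1 by lia. subst j. rewrite eqxx.
  have := Smin_le X (ltac:(apply/andP; split; [apply: leqnn| lia]) : i.-1 <= i.-1 < N).
  lia.
have -> : (j == i.-1) = false by apply/eqP; lia.
by rewrite [RHS](SminS _ hj).
Qed.

Lemma Qmax_step X i : 0 < i -> X i.-1 < X i ->
  forall n, Qmax (fun k => X (swapn i.-1 i k)) n = Qmax X (if n == i then i.+1 else n).
Proof.
move=> i0 hx; elim=> [|n IH].
  have -> : (0 == i) = false by apply/eqP; lia.
  by rewrite !Qmax0.
rewrite QmaxS IH /swapn.
case: (n =P i) => [->|ni].
   have -> : (i.+1 == i) = false by apply/eqP; lia.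
  have -> : (i == i.-1) = false by apply/eqP; lia.
  have := Qmax_ge X (ltac:(lia) : i.-1 < i.+1). lia.
case: (n.+1 =P i) => [h|h].
  have -> : n = i.-1 by lia.
  rewrite eqxx; have -> : i.+1 = i.-1.+2 by lia.
  rewrite !QmaxS; have -> : i.-1.+1 = i by lia. lia.
have -> : (n == i.-1) = false by apply/eqP; lia.
by rewrite QmaxS.
Qed.

Lemma Smin_swap N X p q r s : p < q -> q < r -> r < s -> s < N ->
  X q < X p -> X r < X q -> X s < X r ->
  forall j, Smin N (fun k => X (swapn q r k)) j = Smin N X j.
Proof.
move=> pq qr rs sN h1 h2 h3; apply: (down_ind (N:=N)) => j hj.
  by rewrite !Smin_geq.
move=> IH; rewrite (SminS _ hj) [RHS](SminS _ hj) IH /swapn.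
case: (j =P q) => [->|_].
  have := Smin_le X (ltac:(lia) : q.+1 <= s < N). lia.
case: (j =P r) => [->|_] //.
have := Smin_le X (ltac:(lia) : r.+1 <= s < N). lia.
Qed.

Lemma Qmax_swap X p q r s : p < q -> q < r -> r < s ->
  X q < X p -> X r < X q -> X s < X r ->
  forall n, Qmax (fun k => X (swapn q r k)) n = Qmax X n.
Proof.
move=> pq qr rs h1 h2 h3; elim=> [|n IH]; first by rewrite !Qmax0.
rewrite !QmaxS IH /swapn.
case: (n =P q) => [->|_].
  have := Qmax_ge X pq. lia.
case: (n =P r) => [->|_] //.
have := Qmax_ge X (ltac:(lia) : p < r). lia.
Qed.

Lemma Smin_id N j : j < N -> Smin N id j = j.
Proof.
move: j; apply: (down_ind (N:=N)) => j hj; first lia.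
move=> IH _; rewrite SminS //=.
case: (ltnP j.+1 N) => h; first by rewrite IH //; lia.
rewrite Smin_geq //; lia.
Qed.

Lemma Qmax_id N m : m <= N -> Qmax id m = m.-1.
Proof.
elim: m => [|m IH] h; first by rewrite Qmax0.
rewrite QmaxS IH /=; lia.
Qed.



Lemma pe_refl N u : phi_eq N u u.
Proof. exact: rst_refl. Qed.
Lemma pe_sym N u v : phi_eq N u v -> phi_eq N v u.
Proof. exact: rst_sym. Qed.
Lemma pe_trans N u v w : phi_eq N u v -> phi_eq N v w -> phi_eq N u w.
Proof. exact: rst_trans. Qed.
Lemma pe_ctx N a b u v : phi_eq N u v -> phi_eq N (a ++ u ++ b) (a ++ v ++ b).
Proof.
elim=> [x y [u0 [v0 [a0 [b0 [H [-> ->]]]]]]| x | x y _ IH | x y z _ IH1 _ IH2].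
- apply: rst_step; exists (a ++ u0), (v0 ++ b), a0, b0; split; first exact: H.
  by split; rewrite !catA.
- exact: rst_refl.
- exact: rst_sym.
- exact: rst_trans IH2.
Qed.
Lemma pe_gen N a b : phi_gen N a b -> phi_eq N a b.
Proof. by move=> h; apply: rst_step; exists [::], [::], a, b; rewrite /= !cats0. Qed.
Lemma pe_l N a u v : phi_eq N u v -> phi_eq N (a ++ u) (a ++ v).
Proof. by move=> h; have := pe_ctx a [::] h; rewrite !cats0. Qed.
Lemma pe_r N b u v : phi_eq N u v -> phi_eq N (u ++ b) (v ++ b).
Proof. by move=> h; have := pe_ctx [::] b h. Qed.

Lemma pe_comm N c u : 0 < c < N ->
  all (fun l => (0 < l < N) && ((l + 2 <= c) || (c + 2 <= l))) u ->
  phi_eq N (u ++ [:: c]) (c :: u).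
Proof.
move=> hc; elim: u => [|l u IH] /=; first by move=> _; exact: pe_refl.
case/andP=> /andP[hl hlc] hu.
apply: pe_trans (_ : phi_eq N (l :: c :: u) _).
  exact: (pe_l [:: l] (IH hu)).
have := pe_r u (pe_gen (pg_hecke (hg_comm hl hc hlc))). by [].
Qed.

Definition run (a i : nat) := iota a.+1 (i - a).

Lemma run_nil a i : i <= a -> run a i = [::].
Proof. by move=> h; rewrite /run (_ : i - a = 0) //; lia. Qed.
Lemma run_cons a i : a < i -> run a i = a.+1 :: run a.+1 i.
Proof. by move=> h; rewrite /run (_ : i - a = (i - a.+1).+1) //; lia. Qed.
Lemma run_cat a b i : a <= b <= i -> run a i = run a b ++ run b i.
Proof.
move=> h; rewrite /run (_ : i - a = (b - a) + (i - b)); last lia.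
by rewrite iotaD (_ : a.+1 + (b - a) = b.+1) //; lia.
Qed.
Lemma run_rcons a i : a <= i -> run a i.+1 = run a i ++ [:: i.+1].
Proof.
move=> h; rewrite (@run_cat a i i.+1); last lia.
by rewrite (@run_cons i i.+1) // (@run_nil i.+1 i.+1).
Qed.
Lemma run_mem a i l : l \in run a i -> a < l <= i.
Proof. rewrite /run mem_iota; lia. Qed.

Lemma pe_W N a c i : a < c <= i -> i < N -> phi_eq N (c :: run a i) (run a i).
Proof.
move=> h iN.
case: (c =P a.+1) => [->|hc].
  rewrite (run_cons (_ : a < i)); last lia.
  have := pe_r (run a.+1 i) (pe_gen (pg_hecke (@hg_idem N a.+1 (ltac:(lia))))).
  by [].
rewrite (@run_cat a c.-2 i); last lia.
rewrite (run_cons (_ : c.-2 < i)); last lia.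
rewrite (run_cons (_ : c.-2.+1 < i)); last lia.
have e1 : c.-2.+1 = c.-1 by lia.
have e2 : c.-1.+1 = c by lia.
rewrite e1 e2.
apply: pe_trans (_ : phi_eq N (run a c.-2 ++ [:: c; c.-1; c] ++ run c i) _).
  have := pe_r ([:: c.-1, c & run c i]) (pe_sym (pe_comm (u:=run a c.-2) (_ : 0 < c < N) _)).
  rewrite -catA. apply. lia.
  apply/allP => l /run_mem; lia.
have H : phi_eq N [:: c; c.-1; c] [:: c.-1; c].
  apply: pe_trans (_ : phi_eq N [:: c.-1; c; c.-1] _).
    have := pe_gen (pg_hecke (@hg_braid N c.-1 (ltac:(lia)) (ltac:(lia)))).
    rewrite e2 => h'; exact: pe_sym h'.
  have := pe_gen (@pg_extra N c.-1 (ltac:(lia)) (ltac:(lia))).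
  by rewrite e2.
exact: (pe_l _ (pe_r (run c i) H)).
Qed.

Lemma pe_Z N a b i : a <= b <= i -> i < N ->
  phi_eq N (run b i ++ run a i) (run a i).
Proof.
move=> h iN; move: {2}(i - b) (erefl (i - b)) => k; elim: k b h => [|k IH] b h hk.
  rewrite run_nil /=; [exact: pe_refl| lia].
rewrite (run_cons (_ : b < i)); last lia.
apply: pe_trans (_ : phi_eq N (b.+1 :: run a i) _).
  exact: (pe_l [:: b.+1] (IH b.+1 (ltac:(lia)) (ltac:(lia)))).
apply: pe_W iN; lia.
Qed.

Lemma pe_Y N a i : i < N -> phi_eq N (run a i ++ run a i.-1) (run a i).
Proof.
move=> iN; move: {2}(i - a) (erefl (i - a)) => k; elim: k a => [|k IH] a hk.
  rewrite !run_nil /=; [exact: pe_refl| lia| lia].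
case: (a.+1 =P i) => [e|ne].
  rewrite (run_nil (_ : i.-1 <= a)) ?cats0; [exact: pe_refl| lia].
rewrite (run_cons (_ : a < i)); last lia.
rewrite (run_cons (_ : a.+1 < i)); last lia.
rewrite (run_cons (_ : a < i.-1)); last lia.
rewrite -(run_cons (_ : a.+1 < i)); last lia.
apply: pe_trans (_ : phi_eq N ([:: a.+1; a.+2; a.+1] ++ run a.+2 i ++ run a.+1 i.-1) _).
  rewrite (run_cons (_ : a.+1 < i)); last lia.
  have := pe_l [:: a.+1; a.+2] (pe_r (run a.+1 i.-1) (@pe_comm N a.+1 (run a.+2 i) (ltac:(lia)) _)).
  rewrite /= -!catA /=. apply. apply/allP => l /run_mem; lia.
apply: pe_trans (_ : phi_eq N ([:: a.+1; a.+2] ++ run a.+2 i ++ run a.+1 i.-1) _).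
  exact: pe_r (pe_gen (@pg_extra N a.+1 (ltac:(lia)) (ltac:(lia)))).
have -> : [:: a.+1; a.+2] ++ run a.+2 i ++ run a.+1 i.-1 = [:: a.+1] ++ (run a.+1 i ++ run a.+1 i.-1).
  by rewrite (run_cons (_ : a.+1 < i)) //; lia.
exact: (pe_l [:: a.+1] (IH a.+1 (ltac:(lia)))).
Qed.

Lemma pe_X N a b i : a <= b <= i -> i < N ->
  phi_eq N (run b i ++ run a i) (run a i ++ run a i.-1).
Proof. by move=> h iN; apply: pe_trans (pe_Z h iN) (pe_sym (pe_Y a iN)). Qed.


Fixpoint Cn (f : nat -> nat) (k : nat) : seq nat :=
  if k is k'.+1 then run (f k) k ++ Cn f k' else [::].

Lemma Cn_mem f k l : l \in Cn f k -> 0 < l <= k.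
Proof.
elim: k => [|k IH] //=; rewrite mem_cat => /orP[/run_mem|/IH]; lia.
Qed.

Lemma Cn_ext f g k : (forall j, j <= k -> f j = g j) -> Cn f k = Cn g k.
Proof.
elim: k => [|k IH] h //=; rewrite h // IH // => j hj; apply: h; lia.
Qed.

Lemma Cn_id k : Cn id k = [::].
Proof. by elim: k => //= k ->; rewrite run_nil. Qed.

Lemma CnE f i : 0 < i -> f 0 = 0 -> Cn f i.-1 = run (f i.-1) i.-1 ++ Cn f i.-2.
Proof.
case: i => [|[|i]] //= _ h0; by rewrite h0 run_nil.
Qed.

Definition vinv (f : nat -> nat) := (forall j, f j <= j) /\ (forall j k, j <= k -> f j <= f k).

Lemma pe_M N f i : 0 < i < N -> vinv f ->
  phi_eq N (Cn f i.-1 ++ [:: i]) (run (f i.-1) i ++ Cn f i.-2).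
Proof.
move=> hi [h1 h2].
case: (i =P 1) => [->|ne].
  have h0 : f 0 = 0 by have := h1 0; lia.
  by rewrite /= h0; apply: pe_refl.
have -> : Cn f i.-1 = run (f i.-1) i.-1 ++ Cn f i.-2.
  by rewrite (_ : i.-1 = i.-2.+1) //; lia.
have -> : i = i.-1.+1 by lia.
rewrite (run_rcons (h1 _)) -!catA.
apply: pe_l => /=.
apply: pe_comm; first lia.
apply/allP => l /Cn_mem; lia.
Qed.

Lemma pe_L N f i : 0 < i < N -> vinv f ->
  phi_eq N (Cn f N.-1 ++ [:: i]) (Cn (fun j => f (sig i j)) N.-1).
Proof.
move=> hi hf; have [h1 h2] := hf.
have h0 : f 0 = 0 by have := h1 0; lia.
have base : phi_eq N (Cn f i ++ [:: i]) (Cn (fun j => f (sig i j)) i).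
  have -> : Cn f i = run (f i) i ++ Cn f i.-1 by rewrite (_ : i = i.-1.+1) //=; lia.
  rewrite -catA.
  apply: pe_trans (pe_l _ (pe_M hi hf)) _.
  rewrite catA.
  apply: pe_trans (pe_r _ (pe_X (_ : f i.-1 <= f i <= i) (_ : i < N))) _.
  - by rewrite h1 h2 //; lia.
  - lia.
  have -> : Cn (fun j => f (sig i j)) i =
     run (f i.-1) i ++ Cn (fun j => f (sig i j)) i.-1.
    have e : i = i.-1.+1 by lia.
    by rewrite [in LHS]e /= -e /sig eqxx.
  rewrite (@Cn_ext _ f); last first.
    by move=> j hj; rewrite /sig; case: eqP => //; lia.
  rewrite (CnE (_ : 0 < i) h0); last lia.
  rewrite -catA; exact: pe_refl.
have: forall d, i + d <= N.-1 ->
   phi_eq N (Cn f (i + d) ++ [:: i]) (Cn (fun j => f (sig i j)) (i + d)).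
  elim=> [|d IH] hd; first by rewrite addn0.
  rewrite addnS /= -catA /sig.
  have -> : ((i + d).+1 == i) = false by apply/eqP; lia.
  apply: pe_l; apply: IH; lia.
move=> /(_ (N.-1 - i)); rewrite (_ : i + (N.-1 - i) = N.-1); last lia.
apply; lia.
Qed.

Definition vw (w : seq nat) : nat -> nat := foldl (fun f i => fun j => f (sig i j)) id w.

Lemma vw_inv w : vinv (vw w).
Proof.
elim/last_ind: w => [|u i [h1 h2]]; first by split => //=.
rewrite /vw foldl_rcons -/(vw u); split.
  move=> j; rewrite /sig; case: eqP => [->|_]; last exact: h1.
  have := h1 i.-1; lia.
move=> j k hjk; apply: h2; rewrite /sig.
case: eqP; case: eqP; lia.
Qed.

Lemma pe_NF N w : all (fun i => (0 < i) && (i < N)) w ->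
  phi_eq N w (Cn (vw w) N.-1).
Proof.
elim/last_ind: w => [|u i IH]; first by rewrite /= Cn_id => _; exact: pe_refl.
rewrite all_rcons => /andP[hi hu].
rewrite /vw foldl_rcons -/(vw u) -cats1.
apply: pe_trans (pe_r _ (IH hu)) _.
exact: pe_L hi (vw_inv u).
Qed.



Definition xf N (x : {perm 'I_N}) (k : nat) : nat :=
  if (insub k : option 'I_N) is Some o then val (x o) else 0.

Lemma xfE N (x : {perm 'I_N}) (o : 'I_N) : xf x o = x o.
Proof. by rewrite /xf valK. Qed.

Lemma tpermV N (a b c : 'I_N) : val (tperm a b c) = swapn a b c.
Proof.
rewrite permE /= /swapn.
case: (c =P a) => [->|ca]; first by rewrite eqxx.
have -> : (val c == val a) = false by apply/eqP => h; apply: ca; apply: val_inj.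
case: (c =P b) => [->|cb]; first by rewrite eqxx.
by have -> : (val c == val b) = false by apply/eqP => h; apply: cb; apply: val_inj.
Qed.

Lemma xf_mul N (a b : 'I_N) (P : {perm 'I_N}) k :
  xf (tperm a b * P)%g k = xf P (swapn a b k).
Proof.
case: (ltnP k N) => hk.
  have -> : k = val (Ordinal hk) by [].
  by rewrite xfE permM -tpermV xfE.
have -> : swapn a b k = k.
  rewrite /swapn; case: eqP => [h|_]; first by have := ltn_ord a; lia.
  case: eqP => [h|_] //; by have := ltn_ord b; lia.
rewrite /xf; case: insubP => [o ho _|//]; lia.
Qed.

Lemma xf1 N k : k < N -> xf (1%g : {perm 'I_N}) k = k.
Proof. by move=> hk; have -> : k = val (Ordinal hk) by []; rewrite xfE perm1. Qed.

Lemma simple_trE N i : 0 < i < N ->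
  exists a b : 'I_N, simple_tr N i = tperm a b /\ val a = i.-1 /\ val b = i.
Proof.
move=> hi; rewrite /simple_tr.
case: insubP => [a _ va|h]; last by exfalso; move: h; apply/negP/negPn; lia.
case: insubP => [b _ vb|h]; last by exfalso; move: h; apply/negP/negPn; lia.
by exists a, b.
Qed.

Lemma pw_rcons N u i :
  perm_of_word N (rcons u i) = (simple_tr N i * perm_of_word N u)%g.
Proof. by elim: u => [|j u IH] /=; rewrite ?mul1g ?mulg1 // IH mulgA. Qed.

Lemma xf_step N u i k : 0 < i < N ->
  xf (perm_of_word N (rcons u i)) k = xf (perm_of_word N u) (swapn i.-1 i k).
Proof.
move=> hi; rewrite pw_rcons; have [a [b [-> [va vb]]]] := simple_trE hi.
by rewrite xf_mul va vb.
Qed.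

Lemma swap_lt (a b c d : nat) : b = a.+1 ->
  ((c != a) || (d != b)) && (c < d) =
  ((swapn a b c != a) || (swapn a b d != b)) && (swapn a b c < swapn a b d).
Proof.
move=> ->; rewrite /swapn.
case: (c =P a) => [hca|hca]; case: (c =P a.+1) => [hcb|hcb];
case: (d =P a) => [hda|hda]; case: (d =P a.+1) => [hdb|hdb]; try lia.
Qed.

Definition invs N (x : {perm 'I_N}) :=
  [set pr : 'I_N * 'I_N | (pr.1 < pr.2) && (x pr.2 < x pr.1)].

Lemma inv_step N (a b : 'I_N) (x : {perm 'I_N}) : val b = (val a).+1 ->
  #|invs (tperm a b * x)%g| + (x b < x a) = #|invs x| + (x a < x b).
Proof.
move=> hab.
set F := fun pr : 'I_N * 'I_N => (tperm a b pr.1, tperm a b pr.2).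
have Finj : injective F.
  by move=> [c d] [c' d'] [/(perm_inj) -> /(perm_inj) ->].
have E : invs (tperm a b * x)%g :\ (a, b) = F @^-1: (invs x :\ (a, b)).
  apply/setP => [[c d]]; rewrite !inE /= !permM.
  have hc := tpermV a b c; have hd := tpermV a b d.
  rewrite /F /= !andbA; congr (_ && _).
  rewrite !xpair_eqE !negb_and -!val_eqE.
  change (\val c) with (nat_of_ord c); change (\val d) with (nat_of_ord d).
  change (\val a) with (nat_of_ord a); change (\val b) with (nat_of_ord b).
  rewrite hc hd swap_lt //; first by rewrite -hc -hd.
rewrite (cardsD1 (a, b) (invs x)) (cardsD1 (a, b) (invs (tperm a b * x)%g)).
rewrite -[#|invs x :\ _|](card_preimset _ Finj) -E.
rewrite !inE /= !permM tpermL tpermR.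
have hlt : a < b by rewrite hab.
rewrite hlt /=.
have := ltn_ord a. have : x a != x b by apply/eqP => /perm_inj h; move: hlt; rewrite h ltnn.
move=> ne _; case: (ltngtP (x a) (x b)) => h; try lia.
Qed.


Definition asc N (P : {perm 'I_N}) i := xf P i.-1 < xf P i.

Inductive good N : seq nat -> Prop :=
| g0 : good N [::]
| gS u i : good N u -> 0 < i < N -> asc (perm_of_word N u) i -> good N (rcons u i).

Lemma xf_neq N (P : {perm 'I_N}) j k : j < N -> k < N -> j != k -> xf P j != xf P k.
Proof.
move=> hj hk ne; have -> : j = val (Ordinal hj) by [].
have -> : k = val (Ordinal hk) by [].
rewrite !xfE; apply/eqP => /val_inj /perm_inj [] h; by rewrite h eqxx in ne.
Qed.

Lemma inv_stepW N u i : 0 < i < N ->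
  #|invs (perm_of_word N (rcons u i))| + (xf (perm_of_word N u) i < xf (perm_of_word N u) i.-1)
  = #|invs (perm_of_word N u)| + (xf (perm_of_word N u) i.-1 < xf (perm_of_word N u) i).
Proof.
move=> hi; rewrite pw_rcons; have [a [b [-> [va vb]]]] := simple_trE hi.
rewrite -va -vb !xfE; apply: inv_step; lia.
Qed.

Lemma inv1 N : #|invs (1%g : {perm 'I_N})| = 0.
Proof.
apply/eqP; rewrite cards_eq0; apply/eqP/setP => [[c d]]; rewrite !inE !perm1 /=.
by apply/negbTE/negP => /andP[h1 h2]; lia.
Qed.

Lemma inv_bound N w : valid_word N w ->
  #|invs (perm_of_word N w)| <= size w /\ (good N w \/ #|invs (perm_of_word N w)| < size w).
Proof.
elim/last_ind: w => [|u i IH]; first by rewrite /= inv1; split => //; left; constructor.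
rewrite /valid_word all_rcons => /andP[hi hu]; have [h1 h2] := IH hu.
have E := inv_stepW u hi; rewrite size_rcons.
have ne := xf_neq (perm_of_word N u) (_ : i.-1 < N) (_ : i < N) (_ : i.-1 != i).
have {ne} ne : xf (perm_of_word N u) i.-1 != xf (perm_of_word N u) i by apply: ne; lia.
case: (ltngtP (xf (perm_of_word N u) i.-1) (xf (perm_of_word N u) i)) => h.
- rewrite h in E; have h' : (xf (perm_of_word N u) i < xf (perm_of_word N u) i.-1) = false by lia.
  rewrite h' in E; split; first lia.
  case: h2 => [g|lt]; last by right; lia.
  by left; constructor.
- rewrite h in E; have h' : (xf (perm_of_word N u) i.-1 < xf (perm_of_word N u) i) = false by lia.
  rewrite h' in E; split; [lia | right; lia].
- by rewrite h eqxx in ne.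
Qed.

Lemma mono_id N (X : nat -> nat) : (forall k, k.+1 < N -> X k < X k.+1) ->
  (forall k, k < N -> X k < N) -> forall k, k < N -> X k = k.
Proof.
move=> hinc hb.
have H : forall d k, k + d < N -> X k + d <= X (k + d).
  elim=> [|d IH] k hk; first by rewrite !addn0.
  have h1 : k + d < N by lia. have h2 : (k + d).+1 < N by lia.
  have := IH k h1; have := hinc (k + d) h2; rewrite !addnS; lia.
move=> k hk.
have e1 : 0 + k < N by lia. have e2 : k + (N.-1 - k) < N by lia.
have := H k 0 e1; have := H (N.-1 - k) k e2; have := hb _ e2. rewrite add0n; lia.
Qed.

Lemma desc_or_id N (x : {perm 'I_N}) :
  (exists i, 0 < i < N /\ xf x i < xf x i.-1) \/ x = 1%g.
Proof.
case: (boolP [exists i : 'I_N, (0 < val i) && (xf x i < xf x i.-1)]).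
  by move=> /existsP[i /andP[h1 h2]]; left; exists i; rewrite h1 ltn_ord.
move=> /existsPn hn; right.
have inc : forall k, k.+1 < N -> xf x k < xf x k.+1.
  move=> k hk; have := hn (Ordinal hk); rewrite /= -leqNgt => hle.
  have ne : xf x k != xf x k.+1 by apply: xf_neq; lia.
  lia.
have bnd : forall k, k < N -> xf x k < N.
  move=> k hk; have -> : k = val (Ordinal hk) by []. by rewrite xfE.
apply/permP => o; apply: val_inj; rewrite perm1.
have h := mono_id inc bnd (ltn_ord o); rewrite xfE in h; exact: h.
Qed.

Lemma exists_word N n (x : {perm 'I_N}) : #|invs x| = n ->
  exists w, valid_word N w /\ perm_of_word N w = x /\ size w = n.
Proof.
elim: n x => [|n IH] x hx.
  case: (desc_or_id x) => [[i [hi hd]]|->]; last by exists [::].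
  have [a [b [ht [va vb]]]] := simple_trE hi.
  have := inv_step x (_ : val b = (val a).+1).
  rewrite -va -vb !xfE in hd. rewrite hd hx; lia.
case: (desc_or_id x) => [[i [hi hd]]|hx1]; last by rewrite hx1 inv1 in hx.
have [a [b [ht [va vb]]]] := simple_trE hi.
have E := inv_step x (_ : val b = (val a).+1).
rewrite -va -vb !xfE in hd.
have hy : #|invs (tperm a b * x)%g| = n.
  have := E (ltac:(lia)); rewrite hd hx; have : (x a < x b) = false by lia.
  move=> ->; lia.
have [w [hv [hp hs]]] := IH _ hy.
exists (rcons w i); split; first by rewrite /valid_word all_rcons; apply/andP; split.
split; last by rewrite size_rcons hs.
by rewrite pw_rcons hp ht mulgA tperm2 mul1g.
Qed.

Lemma reduced_good N (x : {perm 'I_N}) w : reduced_word x w -> good N w.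
Proof.
move=> [hv [hp hmin]].
have [w0 [hv0 [hp0 hs0]]] := exists_word (erefl #|invs x|).
have := hmin w0 hv0 hp0; rewrite hs0.
have [hle [g|hlt]] := inv_bound hv => //.
rewrite hp in hlt; lia.
Qed.


Lemma Smin_ext N X Y j : (forall k, X k = Y k) -> Smin N X j = Smin N Y j.
Proof. by move=> h; apply: eq_big_nat => k _. Qed.
Lemma Smin_extN N X Y j : (forall k, k < N -> X k = Y k) -> Smin N X j = Smin N Y j.
Proof. by move=> h; apply: eq_big_nat => k /andP[_ hk]; apply: h. Qed.
Lemma Qmax_ext X Y n : (forall k, k < n -> X k = Y k) -> Qmax X n = Qmax Y n.
Proof. by move=> h; apply: eq_big_nat => k /andP[_ hk]; apply: h. Qed.

Lemma vw_smin N w : good N w -> forall j, j < N -> vw w j = Smin N (xf (perm_of_word N w)) j.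
Proof.
elim=> [|u i g IH hi ha] j hj.
  by rewrite /= (Smin_extN (Y:=id)) ?Smin_id // => k hk; apply: xf1.
rewrite /vw foldl_rcons -/(vw u) IH; last by rewrite /sig; case: eqP; lia.
rewrite -Smin_step //.
by apply: Smin_ext => k; rewrite xf_step.
Qed.

Lemma vw_psi N w : good N w -> forall j, j < N ->
  vw (psi_word N w) j = N.-1 - Qmax (xf (perm_of_word N w)) (N - j).
Proof.
elim=> [|u i g IH hi ha] j hj.
  rewrite /= (Qmax_ext (Y:=id)) ?(Qmax_id (N:=N)); [rewrite /vw /=; lia| lia|].
  move=> k hk; apply: xf1; lia.
rewrite /psi_word map_rcons -/(psi_word N u) /vw foldl_rcons -/(vw (psi_word N u)).
rewrite IH; last by rewrite /sig; case: eqP; lia.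
rewrite (Qmax_ext (X := xf (perm_of_word N (rcons u i)))
          (Y := fun k => xf (perm_of_word N u) (swapn i.-1 i k))); last first.
  by move=> k _; rewrite xf_step.
rewrite Qmax_step //; last by case/andP: hi.
congr (_ - Qmax _ _); rewrite /sig.
case: (j =P N - i) => h; case: (N - j =P i) => h2; lia.
Qed.

Theorem mainTheorem13 (N : nat) (x : {perm 'I_N}) (p q r s : 'I_N) :
  minimal_4321 x p q r s ->
  forall w w' : seq nat,
    reduced_word x w -> reduced_word (tperm q r * x)%g w' ->
    omega_eq N w w'.
Proof.
move=> [h4 _] w w' hw hw'.
have gw := reduced_good hw; have gw' := reduced_good hw'.
have [hv [hp _]] := hw; have [hv' [hp' _]] := hw'.
move: h4; rewrite /is_4321 => /and5P[pq qr rs h1 /andP[h2 h3]].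
have N0 : 0 < N by have := ltn_ord p; lia.
set X := xf x.
have hX : forall k, xf (tperm q r * x)%g k = X (swapn q r k) by move=> k; rewrite xf_mul.
have hxq : X q < X p by rewrite /X !xfE.
have hxr : X r < X q by rewrite /X !xfE.
have hxs : X s < X r by rewrite /X !xfE.
have sN := ltn_ord s.
have hS : forall j, j < N -> vw w j = vw w' j.
  move=> j hj; rewrite (vw_smin gw) // (vw_smin gw') // hp hp'.
  by rewrite (@Smin_ext N _ _ j hX) (Smin_swap pq qr rs sN hxq hxr hxs).
have hQ : forall j, j < N -> vw (psi_word N w) j = vw (psi_word N w') j.
  move=> j hj; rewrite (vw_psi gw) // (vw_psi gw') // hp hp'.
  rewrite (Qmax_ext (X := xf (tperm q r * x)%g) (Y := fun k => X (swapn q r k))); last by move=> k _; rewrite hX.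
  by rewrite (Qmax_swap pq qr rs hxq hxr hxs).
have vpsi : forall u, valid_word N u -> valid_word N (psi_word N u).
  move=> u; rewrite /valid_word /psi_word all_map => /allP hu; apply/allP => l hl /=.
  have := hu l hl; lia.
split.
  apply: pe_trans (pe_NF hv) _; rewrite (@Cn_ext _ (vw w')); last first.
    move=> j hj; apply: hS; lia.
  exact: pe_sym (pe_NF hv').
apply: pe_trans (pe_NF (vpsi _ hv)) _; rewrite (@Cn_ext _ (vw (psi_word N w'))); last first.
  move=> j hj; apply: hQ; lia.
exact: pe_sym (pe_NF (vpsi _ hv')).
Qed.
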